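(* Let $n\ge 3$, and let $F$ be the free group on $s_1,\dots,s_{n-1}$ and $R$ the normal closure in $F$ of the relators $[s_i,s_j]$ ($1\le i<j-1\le n-2$), $[s_i,s_{i+1},s_i]$ and $[s_i,s_{i+1},s_{i+1}]$ ($1\le i\le n-2$), $[[s_i,s_{i+1}],[s_{i+1},s_{i+2}]]$ ($1\le i\le n-3$), so that $F/R\cong\mathrm{UT}_n(\mathbb Z)$. Suppose that for integers $a_{ij}$ ($1\le i<j-1\le n-2$), $b_i,c_i$ ($1\le i\le n-2$) and $d_i\in\{0,1\}$ ($1\le i\le n-3$) the element $$\prod_{i<j-1}[s_i,s_j]^{a_{ij}}\cdot\prod_i[s_i,s_{i+1},s_i]^{b_i}\cdot\prod_i[s_i,s_{i+1},s_is_{i+1}^{-1}]^{c_i}\cdot\prod_i[[s_i,s_{i+1}],[s_{i+1},s_{i+2}]]^{d_i}$$ lies in $[R,F]$. Then all $a_{ij},b_i,c_i,d_i$ are zero.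
   Context: Commutator conventions: $[a,b]=a^{-1}b^{-1}ab$, and commutators are left-normed: $[a_1,\dots,a_k]=[[a_1,\dots,a_{k-1}],a_k]$. The isomorphism $F/R\cong\mathrm{UT}_n(\mathbb Z)$ sends $s_i$ to $I+E_{i,i+1}$. *)

(* Defs.v *)
From Stdlib Require Import ZArith.
From mathcomp Require Import all_boot.
Set Implicit Arguments. Unset Strict Implicit. Unset Printing Implicit Defensive.

(* a letter (k, e): generator s_k if e = false, s_k^{-1} if e = true *)
Definition letter := (nat * bool)%type.
Definition word := seq letter.

Definition wordF (n : nat) (w : word) : bool := all (fun l => (0 < l.1 < n)%N) w.

Definition reduce (w : word) : word :=
  foldr (fun x acc => match acc with
                      | y :: t => if (y.1 == x.1) && (y.2 != x.2) then t else x :: acc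
                      | [::] => [:: x] end) [::] w.

Definition feq (u v : word) : Prop := reduce u = reduce v.

Definition winv (w : word) : word := rev (map (fun l => (l.1, ~~ l.2)) w).

Definition gen (k : nat) : word := [:: (k, false)].
Definition geninv (k : nat) : word := [:: (k, true)].

Definition comm (a b : word) : word := winv a ++ winv b ++ a ++ b.
Definition comm3 (a b c : word) : word := comm (comm a b) c.

Definition wpow (w : word) (z : Z) : word :=
  if (0 <=? z)%Z then flatten (nseq (Z.to_nat z) w)
  else flatten (nseq (Z.to_nat (- z)) (winv w)).

Definition relator (n : nat) (r : word) : Prop :=
  (exists i j, [/\ (1 <= i)%N, (i.+1 < j)%N, (j <= n - 1)%N &
                  r = comm (gen i) (gen j)])
  \/ (exists i, [/\ (1 <= i)%N, (i <= n - 2)%N &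
                  r = comm3 (gen i) (gen i.+1) (gen i)])
  \/ (exists i, [/\ (1 <= i)%N, (i <= n - 2)%N &
                  r = comm3 (gen i) (gen i.+1) (gen i.+1)])
  \/ (exists i, [/\ (1 <= i)%N, (i <= n - 3)%N &
                  r = comm (comm (gen i) (gen i.+1)) (comm (gen i.+1) (gen i.+2))]).

Inductive inR (n : nat) : word -> Prop :=
| inR_nil : inR n [::]
| inR_conj : forall r g, relator n r -> wordF n g -> inR n (winv g ++ r ++ g)
| inR_mul : forall u v, inR n u -> inR n v -> inR n (u ++ v)
| inR_inv : forall u, inR n u -> inR n (winv u)
| inR_eq : forall u v, inR n u -> wordF n v -> feq u v -> inR n v.

Inductive inRF (n : nat) : word -> Prop :=
| inRF_nil : inRF n [::]
| inRF_comm : forall r f, inR n r -> wordF n f -> inRF n (comm r f)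
| inRF_mul : forall u v, inRF n u -> inRF n v -> inRF n (u ++ v)
| inRF_inv : forall u, inRF n u -> inRF n (winv u)
| inRF_eq : forall u v, inRF n u -> wordF n v -> feq u v -> inRF n v.

Definition theElement (n : nat) (a : nat -> nat -> Z) (b c d : nat -> Z) : word :=
  flatten [seq wpow (comm (gen i) (gen j)) (a i j)
          | i <- iota 1 (n - 1), j <- iota (i + 2) (n - 2 - i)]
  ++ flatten [seq wpow (comm3 (gen i) (gen i.+1) (gen i)) (b i) | i <- iota 1 (n - 2)]
  ++ flatten [seq wpow (comm3 (gen i) (gen i.+1) (gen i ++ geninv i.+1)) (c i)
             | i <- iota 1 (n - 2)]
  ++ flatten [seq wpow (comm (comm (gen i) (gen i.+1)) (comm (gen i.+1) (gen i.+2))) (d i)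
             | i <- iota 1 (n - 3)].

(* Main.v *)
Require Import Defs.
From Stdlib Require Import ZArith.
From mathcomp Require Import all_boot.
From Stdlib Require Import Lia Btauto.
From mathcomp Require Import zify_ssreflect.
Set Implicit Arguments. Unset Strict Implicit. Unset Printing Implicit Defensive.

Record grp := Grp {
  GT :> Type; Gm : GT -> GT -> GT; Gi : GT -> GT; G1 : GT;
  GmA : forall x y z, Gm x (Gm y z) = Gm (Gm x y) z;
  Gm1 : forall x, Gm G1 x = x;
  Gm_1 : forall x, Gm x G1 = x;
  GmV : forall x, Gm (Gi x) x = G1;
  GmV' : forall x, Gm x (Gi x) = G1 }.

Section Grp.
Variable Gr : grp.
Local Notation gm := (@Gm Gr).
Local Notation gi := (@Gi Gr).
Local Notation g1 := (@G1 Gr).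
Let gmA := @GmA Gr.
Let gm1 := @Gm1 Gr.
Let gm_1 := @Gm_1 Gr.
Let gmV := @GmV Gr.
Let gmV' := @GmV' Gr.
Variable sg : nat -> Gr.

Definition evl (l : letter) := if l.2 then gi (sg l.1) else sg l.1.
Fixpoint ev (w : word) := match w with [::] => g1 | l :: w' => gm (evl l) (ev w') end.

Lemma ev_cat u v : ev (u ++ v) = gm (ev u) (ev v).
Proof. elim: u => [|l u IH] /=; first by rewrite gm1. by rewrite IH gmA. Qed.

Lemma inv_uniq w z : gm w z = g1 -> gi z = w.
Proof. move=> H. by rewrite -[gi z]gm1 -H -gmA gmV' gm_1. Qed.

Lemma gi_gi x : gi (gi x) = x.
Proof. exact: inv_uniq. Qed.

Lemma gi1 : gi g1 = g1.
Proof. by apply: inv_uniq; rewrite gm1. Qed.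

Lemma gi_gm x y : gi (gm x y) = gm (gi y) (gi x).
Proof. apply: inv_uniq. by rewrite -gmA (gmA (gi x)) gmV gm1 gmV. Qed.

Lemma ev_rcons s x : ev (rcons s x) = gm (ev s) (gm (evl x) g1).
Proof. by rewrite -cats1 ev_cat. Qed.

Lemma ev_winv w : ev (winv w) = gi (ev w).
Proof.
elim: w => [|l w IH]; first by rewrite /= gi1.
rewrite /winv /= rev_cons ev_rcons -/(winv w) IH gm_1 gi_gm.
congr gm. by case: l => k [] /=; rewrite ?gi_gi.
Qed.

Lemma ev_reduce w : ev (reduce w) = ev w.
Proof.
elim: w => [|x w IH] //=.
rewrite -IH; case: (reduce w) => [|y t] //=.
case: ifP => // /andP [/eqP E1 E2].
case: x y E1 E2 => [k e] [k' e'] /= -> {k'}.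
by case: e; case: e' => //= _; rewrite gmA ?gmV ?gmV' gm1.
Qed.

Lemma feq_ev u v : feq u v -> ev u = ev v.
Proof. by rewrite /feq => H; rewrite -ev_reduce H ev_reduce. Qed.

Definition gc x y := gm (gi x) (gm (gi y) (gm x y)).

Lemma ev_comm u v : ev (comm u v) = gc (ev u) (ev v).
Proof. by rewrite /comm !ev_cat !ev_winv. Qed.

Lemma gc1l y : gc g1 y = g1.
Proof. by rewrite /gc gi1 gm1 gm1 gmV. Qed.
Lemma gc1r y : gc y g1 = g1.
Proof. by rewrite /gc gi1 gm1 gm_1 gmV. Qed.

Lemma ev_gen k : ev (gen k) = sg k.
Proof. by rewrite /= gm_1. Qed.
Lemma ev_geninv k : ev (geninv k) = gi (sg k).
Proof. by rewrite /= gm_1. Qed.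

Definition cent c := forall k, gm (sg k) c = gm c (sg k).

Lemma cent_inv s c : gm s c = gm c s -> gm (gi s) c = gm c (gi s).
Proof.
move=> H. rewrite -[c in LHS]gm_1 -(gmV' s) (gmA c) -H.
by rewrite !gmA gmV gm1.
Qed.

Lemma cent_ev c w : cent c -> gm (ev w) c = gm c (ev w).
Proof.
move=> Hc; elim: w => [|l w IH] /=; first by rewrite gm1 gm_1.
rewrite -gmA IH !gmA; congr gm.
case: l => k [] /=; last exact: Hc.
by apply: cent_inv.
Qed.

Lemma cent_mul c e : cent c -> cent e -> cent (gm c e).
Proof. by move=> Hc He k; rewrite gmA Hc -gmA He gmA. Qed.

Lemma cent_gi c : cent c -> cent (gi c).
Proof.
move=> Hc k. have H := Hc k.
have : gm (gi c) (gm (gm (sg k) c) (gi c)) = gm (gi c) (gm (gm c (sg k)) (gi c)) by rewrite H.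
by rewrite -!gmA gmV' gm_1 !gmA gmV gm1.
Qed.

Lemma inR_cent n : (forall r, relator n r -> cent (ev r)) ->
  forall w, inR n w -> cent (ev w).
Proof.
move=> Hrel w; elim => {w}.
- by move=> k /=; rewrite gm1 gm_1.
- move=> r g /Hrel Hr _. rewrite !ev_cat ev_winv -(cent_ev g Hr).
  by rewrite gmA gmV gm1.
- by move=> u v _ Hu _ Hv; rewrite ev_cat; apply: cent_mul.
- by move=> u _ Hu; rewrite ev_winv; apply: cent_gi.
- by move=> u v _ Hu _ /feq_ev <-.
Qed.

Lemma inRF_one n : (forall r, relator n r -> cent (ev r)) ->
  forall w, inRF n w -> ev w = g1.
Proof.
move=> Hrel w; elim => {w} //.
- move=> r f /(inR_cent Hrel) Hr _. rewrite ev_comm /gc -(cent_ev f Hr).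
  by rewrite (gmA (gi (ev f))) gmV gm1 gmV.
- by move=> u v _ Hu _ Hv; rewrite ev_cat Hu Hv gm1.
- by move=> u _ Hu; rewrite ev_winv Hu gi1.
- by move=> u v _ Hu _ /feq_ev <-.
Qed.

Variable emb : Z -> Gr.
Hypothesis emb_add : forall x y, emb (x + y) = gm (emb x) (emb y).

Lemma emb0 : emb 0 = g1.
Proof.
have H := emb_add 0 0. rewrite Z.add_0_r in H.
have : gm (gi (emb 0)) (emb 0) = gm (gi (emb 0)) (gm (emb 0) (emb 0)) by rewrite -H.
by rewrite gmA gmV gm1 => ->.
Qed.

Lemma embN x : emb (- x) = gi (emb x).
Proof. symmetry; apply: inv_uniq. by rewrite -emb_add Z.add_opp_diag_l emb0. Qed.

Lemma ev_nseq w t m : ev w = emb t -> ev (flatten (nseq m w)) = emb (t * Z.of_nat m).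
Proof.
move=> H; elim: m => [|m IH]; first by rewrite Z.mul_0_r emb0.
by rewrite /= ev_cat IH H -emb_add; congr emb; lia.
Qed.

Lemma ev_wpow w t z : ev w = emb t -> ev (wpow w z) = emb (t * z).
Proof.
move=> H; rewrite /wpow; case: ifP => /Z.leb_spec0 Hz.
  by rewrite (ev_nseq _ H) Z2Nat.id.
have H' : ev (winv w) = emb (- t) by rewrite ev_winv embN H.
rewrite (ev_nseq _ H') Z2Nat.id; [congr emb; lia | lia].
Qed.

Definition sumZ (s : seq Z) := foldr Z.add 0%Z s.

Lemma ev_flat (s : seq nat) (F : nat -> word) (f : nat -> Z) :
  (forall k, k \in s -> ev (F k) = emb (f k)) ->
  ev (flatten (map F s)) = emb (sumZ (map f s)).
Proof.
elim: s => [|x s IH] H /=; first by rewrite emb0.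
rewrite ev_cat H ?mem_head // IH ?emb_add // => k Hk.
by apply: H; rewrite in_cons Hk orbT.
Qed.

Lemma ev_flat2 (s : seq nat) (t : nat -> seq nat) (F : nat -> nat -> word) (f : nat -> nat -> Z) :
  (forall k l, k \in s -> l \in t k -> ev (F k l) = emb (f k l)) ->
  ev (flatten [seq F k l | k <- s, l <- t k]) =
  emb (sumZ (map (fun k => sumZ (map (f k) (t k))) s)).
Proof.
elim: s => [|x s IH] H /=; first by rewrite emb0.
rewrite flatten_cat ev_cat (@ev_flat _ _ (f x)); last by move=> l Hl; apply: H; rewrite ?mem_head.
rewrite IH ?emb_add // => k l Hk Hl.
by apply: H; rewrite ?in_cons ?Hk ?orbT.
Qed.


Lemma detect n a b c d fa fb fc fd :
  (forall r, relator n r -> cent (ev r)) ->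
  (forall k l, k \in iota 1 (n - 1) -> l \in iota (k + 2) (n - 2 - k) ->
     ev (wpow (comm (gen k) (gen l)) (a k l)) = emb (fa k l)) ->
  (forall k, k \in iota 1 (n - 2) ->
     ev (wpow (comm3 (gen k) (gen k.+1) (gen k)) (b k)) = emb (fb k)) ->
  (forall k, k \in iota 1 (n - 2) ->
     ev (wpow (comm3 (gen k) (gen k.+1) (gen k ++ geninv k.+1)) (c k)) = emb (fc k)) ->
  (forall k, k \in iota 1 (n - 3) ->
     ev (wpow (comm (comm (gen k) (gen k.+1)) (comm (gen k.+1) (gen k.+2))) (d k)) = emb (fd k)) ->
  inRF n (theElement n a b c d) ->
  emb (sumZ (map (fun k => sumZ (map (fa k) (iota (k + 2) (n - 2 - k)))) (iota 1 (n - 1)))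
       + (sumZ (map fb (iota 1 (n - 2))) + (sumZ (map fc (iota 1 (n - 2)))
       + sumZ (map fd (iota 1 (n - 3)))))) = g1.
Proof.
move=> Hrel Ha Hb Hc Hd /(inRF_one Hrel) <-.
rewrite /theElement !ev_cat (ev_flat2 Ha) (ev_flat Hb) (ev_flat Hc) (ev_flat Hd).
by rewrite !emb_add.
Qed.
End Grp.

Lemma sumZ_eq0 (s : seq nat) (f : nat -> Z) :
  (forall k, k \in s -> f k = 0%Z) -> sumZ (map f s) = 0%Z.
Proof.
elim: s => [|x s IH] H //=. rewrite H ?mem_head // IH // => k Hk.
by apply: H; rewrite in_cons Hk orbT.
Qed.

Lemma sumZ_single (s : seq nat) (f : nat -> Z) i :
  uniq s -> i \in s -> (forall k, k \in s -> k != i -> f k = 0%Z) ->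
  sumZ (map f s) = f i.
Proof.
elim: s => [|x s IH] //= /andP [Hx Hu] Hi H.
rewrite in_cons in Hi. case: (eqVneq i x) => [E|Ne].
  subst x. rewrite sumZ_eq0 ?Z.add_0_r // => k Hk. apply: H; rewrite ?in_cons ?Hk ?orbT //.
  by apply: contraNneq Hx => <-.
rewrite H ?mem_head 1?eq_sym // IH //; first by move: Hi; rewrite (negPf Ne).
by move=> k Hk; apply: H; rewrite in_cons Hk orbT.
Qed.

Record ut4 := U4 { c12 : Z; c13 : Z; c14 : Z; c23 : Z; c24 : Z; c34 : Z }.
Definition m4 (A B : ut4) : ut4 :=
  U4 (c12 A + c12 B)%Z (c13 A + c13 B + c12 A * c23 B)%Z
     (c14 A + c14 B + c12 A * c24 B + c13 A * c34 B)%Z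
     (c23 A + c23 B)%Z (c24 A + c24 B + c23 A * c34 B)%Z (c34 A + c34 B)%Z.
Definition i4 (A : ut4) : ut4 :=
  U4 (- c12 A)%Z (- c13 A + c12 A * c23 A)%Z
     (- c14 A - c12 A * (- c24 A + c23 A * c34 A) + c13 A * c34 A)%Z
     (- c23 A)%Z (- c24 A + c23 A * c34 A)%Z (- c34 A)%Z.
Definition o4 := U4 0 0 0 0 0 0.
Lemma m4A x y z : m4 x (m4 y z) = m4 (m4 x y) z.
Proof. case: x; case: y; case: z => * /=; rewrite /m4 /=; f_equal; ring. Qed.
Lemma m41 x : m4 o4 x = x.
Proof. case: x => * /=; rewrite /m4 /=; f_equal; ring. Qed.
Lemma m4_1 x : m4 x o4 = x.
Proof. case: x => * /=; rewrite /m4 /=; f_equal; ring. Qed.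
Lemma m4V x : m4 (i4 x) x = o4.
Proof. case: x => * /=; rewrite /m4 /o4 /=; f_equal; ring. Qed.
Lemma m4V' x : m4 x (i4 x) = o4.
Proof. case: x => * /=; rewrite /m4 /o4 /=; f_equal; ring. Qed.
Definition G4 : grp := Grp m4A m41 m4_1 m4V m4V'.
Definition e4 z : G4 := U4 0 0 z 0 0 0.
Lemma e4_add x y : e4 (x + y) = Gm (e4 x) (e4 y).
Proof. rewrite /= /m4 /e4 /=; f_equal; ring. Qed.
Lemma e4_cent z (x : G4) : Gm x (e4 z) = Gm (e4 z) x.
Proof. case: x => * /=; rewrite /m4 /e4 /=; f_equal; ring. Qed.
Lemma e4_inj z : e4 z = G1 G4 -> z = 0%Z.
Proof. by case. Qed.
Lemma cent_e4 sg z : cent sg (e4 z).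
Proof. by move=> k; rewrite e4_cent. Qed.
Lemma cent_1 (Gr : grp) sg : cent sg (G1 Gr).
Proof. by move=> k; rewrite Gm1 Gm_1. Qed.

Definition XA : G4 := U4 1 0 0 0 0 0.
Definition YA : G4 := U4 0 0 0 0 1 0.
Definition sA (i j k : nat) : G4 := if k == i then XA else if k == j then YA else G1 G4.

Lemma sA_adj i j k : i.+1 < j -> gc (sA i j k) (sA i j k.+1) = G1 G4.
Proof.
move=> Hij; rewrite /sA.
repeat case: eqP => ? //; subst; rewrite ?gc1l ?gc1r ?gc1l ?gc1r //; lia.
Qed.

Lemma sA_far i j k l : i.+1 < j -> k.+1 < l ->
  gc (sA i j k) (sA i j l) = e4 (if (k == i) && (l == j) then 1%Z else 0%Z).
Proof.
move=> Hij Hkl; rewrite /sA.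
repeat case: eqP => ? //; subst; rewrite ?gc1l ?gc1r ?gc1l ?gc1r //; try lia; reflexivity.
Qed.

Lemma relA n i j : i.+1 < j -> forall r, relator n r -> cent (sA i j) (ev (sA i j) r).
Proof.
move=> Hij r [[k [l [H1 H2 H3 ->]]] | [[k [H1 H2 ->]] | [[k [H1 H2 ->]] | [k [H1 H2 ->]]]]].
- rewrite ev_comm !ev_gen sA_far //; apply: cent_e4.
- rewrite /comm3 !ev_comm !ev_gen sA_adj // gc1l; apply: cent_1.
- rewrite /comm3 !ev_comm !ev_gen sA_adj // gc1l; apply: cent_1.
- rewrite !ev_comm !ev_gen sA_adj // gc1l; apply: cent_1.
Qed.

Lemma detA n a b c d i j : 1 <= i -> i.+1 < j -> j <= n - 1 ->
  inRF n (theElement n a b c d) -> a i j = 0%Z.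
Proof.
move=> H1 H2 H3 HR.
refine (_ (@detect G4 (sA i j) e4 e4_add n a b c d
  (fun k l => ((if (k == i) && (l == j) then 1 else 0) * a k l)%Z)
  (fun _ => 0%Z) (fun _ => 0%Z) (fun _ => 0%Z) (@relA n i j H2) _ _ _ _ HR)).
all: cycle 1.
- move=> k l Hk Hl; apply: (ev_wpow e4_add).
  rewrite ev_comm !ev_gen sA_far //. rewrite mem_iota in Hl; lia.
- move=> k _; rewrite (ev_wpow e4_add (t := 0%Z)) ?Z.mul_0_l //.
  by rewrite /comm3 !ev_comm !ev_gen sA_adj // gc1l.
- move=> k _; rewrite (ev_wpow e4_add (t := 0%Z)) ?Z.mul_0_l //.
  by rewrite /comm3 !ev_comm !ev_gen sA_adj // gc1l.
- move=> k _; rewrite (ev_wpow e4_add (t := 0%Z)) ?Z.mul_0_l //.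
  by rewrite !ev_comm !ev_gen sA_adj // gc1l.
move/e4_inj.
rewrite !(@sumZ_eq0 _ (fun _ => 0%Z)) //.
rewrite (@sumZ_single _ _ i) ?iota_uniq ?mem_iota //; try lia; last first.
  move=> k _ Hk; apply: sumZ_eq0 => l _; by rewrite (negPf Hk).
rewrite (@sumZ_single _ _ j) ?iota_uniq ?mem_iota //; try lia; last first.
  move=> l _ Hl; by rewrite eqxx (negPf Hl).
rewrite !eqxx; cbv [andb]; rewrite Z.mul_1_l; lia.
Qed.

Section Pair.
Variables (X Y : G4) (tx ty tc : Z).
Hypothesis hx : gc (gc X Y) X = e4 tx.
Hypothesis hy : gc (gc X Y) Y = e4 ty.
Hypothesis hc : gc (gc X Y) (Gm X (Gi Y)) = e4 tc.

Definition sP (i k : nat) : G4 := if k == i then X else if k == i.+1 then Y else G1 G4.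

Lemma sP_far i k l : k.+1 < l -> gc (sP i k) (sP i l) = G1 G4.
Proof. move=> Hkl; rewrite /sP. repeat case: eqP => ? //; subst; rewrite ?gc1l ?gc1r ?gc1l ?gc1r //; lia. Qed.

Lemma sP_x i k : gc (gc (sP i k) (sP i k.+1)) (sP i k) = e4 (if k == i then tx else 0%Z).
Proof. rewrite /sP. repeat case: eqP => ? //; subst; rewrite ?gc1l ?gc1r ?gc1l ?gc1r //; lia. Qed.

Lemma sP_y i k : gc (gc (sP i k) (sP i k.+1)) (sP i k.+1) = e4 (if k == i then ty else 0%Z).
Proof. rewrite /sP. repeat case: eqP => ? //; subst; rewrite ?gc1l ?gc1r ?gc1l ?gc1r //; lia. Qed.

Lemma sP_c i k : gc (gc (sP i k) (sP i k.+1)) (Gm (sP i k) (Gi (sP i k.+1))) =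
   e4 (if k == i then tc else 0%Z).
Proof. rewrite /sP. repeat case: eqP => ? //; subst; rewrite ?gc1l ?gc1r ?gc1l ?gc1r //; lia. Qed.

Lemma sP_d i k : gc (gc (sP i k) (sP i k.+1)) (gc (sP i k.+1) (sP i k.+2)) = G1 G4.
Proof. rewrite /sP. repeat case: eqP => ? //; subst; rewrite ?gc1l ?gc1r ?gc1l ?gc1r //; lia. Qed.

Lemma relP n i r : relator n r -> cent (sP i) (ev (sP i) r).
Proof.
move=> [[k [l [H1 H2 H3 ->]]] | [[k [H1 H2 ->]] | [[k [H1 H2 ->]] | [k [H1 H2 ->]]]]].
- rewrite ev_comm !ev_gen sP_far //; apply: cent_1.
- rewrite /comm3 !ev_comm !ev_gen sP_x; apply: cent_e4.
- rewrite /comm3 !ev_comm !ev_gen sP_y; apply: cent_e4.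
- rewrite !ev_comm !ev_gen sP_d; apply: cent_1.
Qed.

Lemma detP n a b c d i : 1 <= i -> i <= n - 2 ->
  inRF n (theElement n a b c d) -> (tx * b i + tc * c i = 0)%Z.
Proof.
move=> H1 H2 HR.
refine (_ (@detect G4 (sP i) e4 e4_add n a b c d
  (fun _ _ => 0%Z)
  (fun k => ((if k == i then tx else 0) * b k)%Z)
  (fun k => ((if k == i then tc else 0) * c k)%Z)
  (fun _ => 0%Z) (@relP n i) _ _ _ _ HR)).
all: cycle 1.
- move=> k l _ Hl; rewrite (ev_wpow e4_add (t := 0%Z)) ?Z.mul_0_l //.
  rewrite ev_comm !ev_gen sP_far //. rewrite mem_iota in Hl; lia.
- move=> k _; apply: (ev_wpow e4_add).
  by rewrite /comm3 !ev_comm !ev_gen sP_x.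
- move=> k _; apply: (ev_wpow e4_add).
  by rewrite /comm3 !ev_comm ev_cat !ev_gen ev_geninv sP_c.
- move=> k _; rewrite (ev_wpow e4_add (t := 0%Z)) ?Z.mul_0_l //.
  by rewrite !ev_comm !ev_gen sP_d.
move/e4_inj.
rewrite (@sumZ_eq0 (iota 1 (n - 1))); last by move=> k _; apply: sumZ_eq0.
rewrite (@sumZ_eq0 _ (fun _ => 0%Z)) //.
rewrite (@sumZ_single _ _ i) ?iota_uniq ?mem_iota //; try lia; last first.
  by move=> k _ Hk; rewrite (negPf Hk).
rewrite (@sumZ_single _ _ i) ?iota_uniq ?mem_iota //; try lia; last first.
  by move=> k _ Hk; rewrite (negPf Hk).
rewrite !eqxx; lia.
Qed.
End Pair.

Definition XB : G4 := U4 1 0 0 1 0 0.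
Definition YB : G4 := U4 0 0 0 0 0 1.
Definition XC : G4 := U4 1 0 0 0 0 0.
Definition YC : G4 := U4 0 0 0 1 0 1.

Lemma detBC n a b c d i : 1 <= i -> i <= n - 2 ->
  inRF n (theElement n a b c d) -> b i = 0%Z /\ c i = 0%Z.
Proof.
move=> H1 H2 HR.
have HB := @detP XB YB (-1) 0 (-1) (erefl _) (erefl _) (erefl _) n a b c d i H1 H2 HR.
have HC := @detP XC YC 0 1 (-1) (erefl _) (erefl _) (erefl _) n a b c d i H1 H2 HR.
lia.
Qed.

Record ut5 := U5 { d01 : bool; d02 : bool; d03 : bool; d04 : bool; d12 : bool; d13 : bool; d14 : bool; d23 : bool; d24 : bool; d34 : bool }.
Definition m5 (A B : ut5) : ut5 := U5
  (xorb (d01 A) (d01 B))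
  (xorb (xorb (d02 A) (d02 B)) (d01 A && d12 B))
  (xorb (xorb (xorb (d03 A) (d03 B)) (d01 A && d13 B)) (d02 A && d23 B))
  (xorb (xorb (xorb (xorb (d04 A) (d04 B)) (d01 A && d14 B)) (d02 A && d24 B)) (d03 A && d34 B))
  (xorb (d12 A) (d12 B))
  (xorb (xorb (d13 A) (d13 B)) (d12 A && d23 B))
  (xorb (xorb (xorb (d14 A) (d14 B)) (d12 A && d24 B)) (d13 A && d34 B))
  (xorb (d23 A) (d23 B))
  (xorb (xorb (d24 A) (d24 B)) (d23 A && d34 B))
  (xorb (d34 A) (d34 B)).
Definition i5 (A : ut5) : ut5 := U5
  (d01 A)
  (xorb (d02 A) (d01 A && d12 A))
  (xorb (xorb (xorb (d03 A) (d01 A && d13 A)) (d02 A && d23 A)) (d01 A && d12 A && d23 A))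
  (xorb (xorb (xorb (xorb (xorb (xorb (xorb (d04 A) (d01 A && d14 A)) (d02 A && d24 A)) (d03 A && d34 A)) (d01 A && d12 A && d24 A)) (d01 A && d13 A && d34 A)) (d02 A && d23 A && d34 A)) (d01 A && d12 A && d23 A && d34 A))
  (d12 A)
  (xorb (d13 A) (d12 A && d23 A))
  (xorb (xorb (xorb (d14 A) (d12 A && d24 A)) (d13 A && d34 A)) (d12 A && d23 A && d34 A))
  (d23 A)
  (xorb (d24 A) (d23 A && d34 A))
  (d34 A).
Definition o5 := U5 false false false false false false false false false false.
Lemma m5A x y z : m5 x (m5 y z) = m5 (m5 x y) z.
Proof. case: x; case: y; case: z => * /=; rewrite /m5 /=; f_equal; btauto. Qed.
Lemma m51 x : m5 o5 x = x.
Proof. case: x => * /=; rewrite /m5 /=; f_equal; btauto. Qed.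
Lemma m5_1 x : m5 x o5 = x.
Proof. case: x => * /=; rewrite /m5 /=; f_equal; btauto. Qed.
Lemma m5V x : m5 (i5 x) x = o5.
Proof. case: x => * /=; rewrite /m5 /o5 /=; f_equal; btauto. Qed.
Lemma m5V' x : m5 x (i5 x) = o5.
Proof. case: x => * /=; rewrite /m5 /o5 /=; f_equal; btauto. Qed.
Lemma cent_1' (Gr : grp) sg : cent sg (G1 Gr).
Proof. by move=> k; rewrite Gm1 Gm_1. Qed.
Definition G5 : grp := Grp m5A m51 m5_1 m5V m5V'.
Definition ex : G5 := U5 true false false false false false false false false false.
Definition ey : G5 := U5 false false false false true false false false false true.
Definition ew : G5 := U5 false false false false false false false true false false.
Definition CC : G5 := gc (gc ex ey) (gc ey ew).
Lemma CC_ne : CC <> G1 G5. Proof. by vm_compute. Qed.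
Lemma CC2 : Gm CC CC = G1 G5. Proof. by vm_compute. Qed.
Definition e5 (z : Z) : G5 := if Z.odd z then CC else G1 G5.
Lemma e5_add x y : e5 (x + y) = Gm (e5 x) (e5 y).
Proof.
rewrite /e5 Z.odd_add; case: (Z.odd x); case: (Z.odd y) => /=;
  by rewrite ?CC2 ?Gm1 ?Gm_1.
Qed.

Definition sD (i k : nat) : G5 :=
  if k == i then ex else if k == i.+1 then ey else if k == i.+2 then ew else G1 G5.

Lemma centD i c : Gm ex c = Gm c ex -> Gm ey c = Gm c ey -> Gm ew c = Gm c ew ->
  cent (sD i) c.
Proof.
move=> Hx Hy Hw k; rewrite /sD.
case: eqP => _ //; case: eqP => _ //; case: eqP => _ //. by rewrite Gm1 Gm_1.
Qed.

Ltac dcase := rewrite /sD; repeat case: eqP => ? //; subst;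
  rewrite ?gc1l ?gc1r ?gc1l ?gc1r ?gc1l ?gc1r //; lia.

Lemma sD_far i k l : k.+1 < l ->
  gc (sD i k) (sD i l) = if (k == i) && (l == i.+2) then gc ex ew else G1 G5.
Proof. move=> H; dcase. Qed.

Lemma sD_x i k : gc (gc (sD i k) (sD i k.+1)) (sD i k) =
  if k == i then gc (gc ex ey) ex else if k == i.+1 then gc (gc ey ew) ey else G1 G5.
Proof. dcase. Qed.

Lemma sD_y i k : gc (gc (sD i k) (sD i k.+1)) (sD i k.+1) =
  if k == i then gc (gc ex ey) ey else if k == i.+1 then gc (gc ey ew) ew else G1 G5.
Proof. dcase. Qed.

Lemma sD_d i k : gc (gc (sD i k) (sD i k.+1)) (gc (sD i k.+1) (sD i k.+2)) =
  if k == i then CC else G1 G5.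
Proof. dcase. Qed.

Lemma relD n i r : relator n r -> cent (sD i) (ev (sD i) r).
Proof.
move=> [[k [l [H1 H2 H3 ->]]] | [[k [H1 H2 ->]] | [[k [H1 H2 ->]] | [k [H1 H2 ->]]]]].
- rewrite ev_comm !ev_gen sD_far //; case: ifP => _; last exact: cent_1'.
  by apply: centD; vm_compute.
- rewrite /comm3 !ev_comm !ev_gen sD_x; case: ifP => _; last case: ifP => _;
    try exact: cent_1'; by apply: centD; vm_compute.
- rewrite /comm3 !ev_comm !ev_gen sD_y; case: ifP => _; last case: ifP => _;
    try exact: cent_1'; by apply: centD; vm_compute.
- rewrite !ev_comm !ev_gen sD_d; case: ifP => _; last exact: cent_1'.
  by apply: centD; vm_compute.
Qed.

Lemma detD n a b c d i : 1 <= i -> i <= n - 3 ->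
  (forall k l, 1 <= k -> k.+1 < l -> l <= n - 1 -> a k l = 0%Z) ->
  (forall k, 1 <= k -> k <= n - 2 -> b k = 0%Z /\ c k = 0%Z) ->
  (d i = 0%Z \/ d i = 1%Z) ->
  inRF n (theElement n a b c d) -> d i = 0%Z.
Proof.
move=> H1 H2 Ha Hbc Hdi HR.
refine (_ (@detect G5 (sD i) e5 e5_add n a b c d
  (fun _ _ => 0%Z) (fun _ => 0%Z) (fun _ => 0%Z)
  (fun k => ((if k == i then 1 else 0) * d k)%Z) (@relD n i) _ _ _ _ HR)).
all: cycle 1.
- move=> k l Hk Hl; rewrite !mem_iota in Hk Hl. rewrite Ha; [by [] | lia | lia | lia].
- move=> k Hk; rewrite !mem_iota in Hk. by rewrite (proj1 (Hbc k _ _)); try lia.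
- move=> k Hk; rewrite !mem_iota in Hk. by rewrite (proj2 (Hbc k _ _)); try lia.
- move=> k _; apply: (ev_wpow e5_add).
  rewrite !ev_comm !ev_gen sD_d. by case: eqP.
rewrite (@sumZ_eq0 (iota 1 (n - 1))); last by move=> k _; apply: sumZ_eq0.
rewrite !(@sumZ_eq0 _ (fun _ => 0%Z)) //.
rewrite (@sumZ_single _ _ i) ?iota_uniq ?mem_iota //; try lia; last first.
  by move=> k _ Hk; rewrite (negPf Hk).
rewrite eqxx Z.mul_1_l /e5.
case: Hdi => -> //=; by move/CC_ne.
Qed.

Theorem mainTheorem5 (n : nat) (a : nat -> nat -> Z) (b c d : nat -> Z) :
  (3 <= n)%N ->
  (forall i, (1 <= i)%N -> (i <= n - 3)%N -> d i = 0%Z \/ d i = 1%Z) ->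
  inRF n (theElement n a b c d) ->
  (forall i j, (1 <= i)%N -> (i.+1 < j)%N -> (j <= n - 1)%N -> a i j = 0%Z) /\
  (forall i, (1 <= i)%N -> (i <= n - 2)%N -> b i = 0%Z /\ c i = 0%Z) /\
  (forall i, (1 <= i)%N -> (i <= n - 3)%N -> d i = 0%Z).
Proof.
move=> Hn Hd HR.
have HA : forall i j, (1 <= i)%N -> (i.+1 < j)%N -> (j <= n - 1)%N -> a i j = 0%Z.
  by move=> i j H1 H2 H3; apply: (detA H1 H2 H3 HR).
have HBC : forall i, (1 <= i)%N -> (i <= n - 2)%N -> b i = 0%Z /\ c i = 0%Z.
  by move=> i H1 H2; apply: (detBC H1 H2 HR).
split; first exact: HA.
split; first exact: HBC.
move=> i H1 H2; apply: (detD H1 H2 HA HBC (Hd i H1 H2) HR).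
Qed.
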